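(* Let $k\ge1$ and $n=2^k-1$, let $1\le r<n$, and let $\mathsf{X}\in\mathbb{R}^{n\times r}$ have unit-norm, linearly independent columns. With the notation of the context, define $$C=-(I^{\otimes k}\otimes\mathcal{C}_{\mathsf{X}})(I^{\otimes k}\otimes S_0)(I^{\otimes k}\otimes\mathcal{C}_{\mathsf{X}}^* )\,V^*\big(O(r)\otimes I^{\otimes n}\big)V.$$ Then, with $|\psi\rangle=|\mathrm{columns}(\mathsf{X})\rangle$, $$C\big(|0\rangle^{\otimes k}\otimes|\psi\rangle\big)=|0\rangle^{\otimes k}\otimes Q|\psi\rangle,$$ where $Q=-\mathcal{C}_{\mathsf{X}}S_0\mathcal{C}_{\mathsf{X}}^*S_r$.
   Context: Fermionic operators on $(\mathbb{C}^2)^{\otimes n}$ are $c_j=\sigma_z^{\otimes(j-1)}\otimes|0\rangle\langle1|\otimes I^{\otimes(n-j)}$, with $\sigma_z=\mathrm{diag}(1,-1)$. The vacuum is $|\emptyset\rangle=|0\cdots0\rangle$. For a unit $x\in\mathbb{R}^n$, set $\mathcal{C}(x)=\sum_ix_i(c_i+c_i^* )$. Put $\mathcal{C}_{\mathsf{X}}=\mathcal{C}(\mathsf{X}_{:1})\cdots\mathcal{C}(\mathsf{X}_{:r})$ and $|\mathrm{columns}(\mathsf{X})\rangle=\mathcal{C}_{\mathsf{X}}|\emptyset\rangle$. For $t\in\{0,\dots,n\}$, $P_t$ projects onto the span of computational basis states of Hamming weight $t$. Let $S_0=\mathbb{I}-2P_0$ and $S_r=\mathbb{I}-2P_r$. A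 control register of $k$ qubits is added. For $s=\sum_{\ell=0}^{k-1}s_\ell2^\ell$, set $|\mathrm{bin}(s)\rangle=|s_0\cdots s_{k-1}\rangle$. Let $U_s=\sum_{t=0}^ne^{2\mathrm{i}\pi ts/(n+1)}P_t$. $\mathrm{CU}_m$ ($m=1,\dots,k$) applies $U_{2^{m-1}}$ to the system register controlled on the $m$-th control qubit being $|1\rangle$. $H$ is the Hadamard gate. $\mathrm{IQFT}|\mathrm{bin}(y)\rangle=(n+1)^{-1/2}\sum_{z=0}^ne^{-2\mathrm{i}\pi yz/(n+1)}|\mathrm{bin}(z)\rangle$. Then $V=(\mathrm{IQFT}\otimes I^{\otimes n})(\prod_{m=1}^k\mathrm{CU}_m)(H^{\otimes k}\otimes I^{\otimes n})$. Finally $O(r)=(\sigma_x^{1-r_0}\otimes\cdots\otimes\sigma_x^{1-r_{k-1}})\mathrm{CZ}_k(\sigma_x^{1-r_0}\otimes\cdots\otimes\sigma_x^{1-r_{k-1}})$, where $r=\sum_\ell r_\ell2^\ell$ and $\mathrm{CZ}_k$ negates $|1\rangle^{\otimes k}$ and fixes all other basis states. *)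

(* Defs.v *)
(* complex numbers R[i] (mathcomp-real-closed) over an
   arbitrary R : realType (mathcomp-analysis, for pi / sin / cos),
   matrices from mathcomp, Kronecker product [tensmx] from real_closed/mxtens
   (index convention: (i,j) |-> i * n + j, i.e. the first factor is the most
   significant / leftmost qubit, as in the usual Kronecker convention). *)
From mathcomp Require Import all_boot all_algebra.
From mathcomp Require Import complex mxtens.
From mathcomp Require Import reals trigo.
Set Implicit Arguments. Unset Strict Implicit. Unset Printing Implicit Defensive.
Import GRing.Theory Num.Theory.
Local Open Scope ring_scope.
Local Open Scope complex_scope.

Section Defs.
Variable R : realType.
Local Notation C := R[i].

Definition adj {m p : nat} (A : 'M[C]_(m, p)) : 'M[C]_(p, m) := map_mx conjc A^T.

Definition qI : 'M[C]_2 := 1%:M.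
Definition sigz : 'M[C]_2 := \matrix_(i, j) ((i == j)%:R * (if (i : nat) == 0 then 1 else -1)).
Definition sigx : 'M[C]_2 := \matrix_(i, j) (i != j)%:R.
Definition ket0bra1 : 'M[C]_2 := \matrix_(i, j) (((i : nat) == 0) && ((j : nat) == 1))%:R.
Definition hadamard : 'M[C]_2 :=
  \matrix_(i, j) (((Num.sqrt (2 : R))^-1)%:C * (if ((i : nat) == 1) && ((j : nat) == 1) then -1 else 1)).
Definition ket1q (b : bool) : 'cV[C]_2 := \col_i (((i : nat) == b)%:R).

Fixpoint tprod (m : nat) (f : nat -> 'M[C]_2) {struct m} : 'M[C]_(2 ^ m) :=
  match m return 'M[C]_(2 ^ m) with
  | 0 => 1%:M
  | m'.+1 => castmx (esym (expnS 2 m'), esym (expnS 2 m'))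
                    (f 0 *t tprod m' (fun i => f i.+1))
  end.

Fixpoint tket (m : nat) (b : nat -> bool) {struct m} : 'cV[C]_(2 ^ m) :=
  match m return 'cV[C]_(2 ^ m) with
  | 0 => 1%:M
  | m'.+1 => castmx (esym (expnS 2 m'), muln1 1)
                    (ket1q (b 0) *t tket m' (fun i => b i.+1))
  end.

Definition idm (m : nat) : 'M[C]_(2 ^ m) := 1%:M.

Definition vac (m : nat) : 'cV[C]_(2 ^ m) := tket m (fun _ => false).

(* fermionic annihilation operator c_{j+1} on n qubits (j 0-based) *)
Definition cop (n : nat) (j : nat) : 'M[C]_(2 ^ n) :=
  tprod n (fun i => if (i < j)%N then sigz else if i == j then ket0bra1 else qI).

Definition Ccal (n : nat) (x : 'cV[R]_n) : 'M[C]_(2 ^ n) :=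
  \sum_(i < n) (x i 0)%:C *: (cop n i + adj (cop n i)).

Definition CX (n r : nat) (X : 'M[R]_(n, r)) : 'M[C]_(2 ^ n) :=
  \big[@mulmx C _ _ _ / idm n]_(j < r) Ccal (col j X).

Definition columns (n r : nat) (X : 'M[R]_(n, r)) : 'cV[C]_(2 ^ n) := CX X *m vac n.

Definition Pw (n t : nat) : 'M[C]_(2 ^ n) :=
  \sum_(b : n.-tuple bool | count id b == t)
     (tket n (nth false b) *m adj (tket n (nth false b))).

Definition Sw (n t : nat) : 'M[C]_(2 ^ n) := idm n - 2%:R *: Pw n t.

Definition expi (theta : R) : C := cos theta +i* sin theta.

Definition Us (n s : nat) : 'M[C]_(2 ^ n) :=
  \sum_(t < n.+1) expi (2 * pi * (t * s)%:R / (n.+1)%:R) *: Pw n t.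

Definition bin (k s : nat) : 'cV[C]_(2 ^ k) := tket k (fun l => odd (s %/ 2 ^ l)).

Definition ctrlproj (k : nat) (m : nat) (b : bool) : 'M[C]_(2 ^ k) :=
  tprod k (fun i => if i == m then ket1q b *m adj (ket1q b) else qI).

(* CU_{m+1}: U_{2^m} on the system controlled on control qubit m+1 *)
Definition CU (k n m : nat) : 'M[C]_(2 ^ k * 2 ^ n) :=
  ctrlproj k m false *t idm n + ctrlproj k m true *t Us n (2 ^ m).

Definition IQFT (k n : nat) : 'M[C]_(2 ^ k) :=
  \sum_(y < n.+1) \sum_(z < n.+1)
     (((Num.sqrt (n.+1)%:R : R)^-1)%:C * expi (- (2 * pi * (y * z)%:R / (n.+1)%:R)))
       *: (bin k z *m adj (bin k y)).

Definition Vop (k n : nat) : 'M[C]_(2 ^ k * 2 ^ n) :=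
  (IQFT k n *t idm n)
  *m (\big[@mulmx C _ _ _ / idm k *t idm n]_(m < k) CU k n m)
  *m (tprod k (fun _ => hadamard) *t idm n).

Definition CZ (k : nat) : 'M[C]_(2 ^ k) :=
  idm k - 2%:R *: (tket k (fun _ => true) *m adj (tket k (fun _ => true))).

Definition Xflip (k r : nat) : 'M[C]_(2 ^ k) :=
  tprod k (fun l => if odd (r %/ 2 ^ l) then qI else sigx).

Definition Oop (k r : nat) : 'M[C]_(2 ^ k) := Xflip k r *m CZ k *m Xflip k r.

Definition Cop (k n r : nat) (X : 'M[R]_(n, r)) : 'M[C]_(2 ^ k * 2 ^ n) :=
  - ((idm k *t CX X) *m (idm k *t Sw n 0) *m (idm k *t adj (CX X))
     *m adj (Vop k n) *m (Oop k r *t idm n) *m Vop k n).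

Definition Qop (n r : nat) (X : 'M[R]_(n, r)) : 'M[C]_(2 ^ n) :=
  - (CX X *m Sw n 0 *m adj (CX X) *m Sw n r).

End Defs.

(* Main.v *)
Require Import Defs.
From mathcomp Require Import all_boot all_algebra.
From mathcomp Require Import complex mxtens.
From mathcomp Require Import reals trigo.
From mathcomp Require Import ring lra.
Import GRing.Theory Num.Theory.
Local Open Scope ring_scope.
Set Implicit Arguments. Unset Strict Implicit. Unset Printing Implicit Defensive.

Section L1.
Variable R : realType.
Local Notation C := R[i].

Lemma castmxM p q r p' q' r' (e1 : p = p') (e2 : q = q') (e3 : r = r')
  (A : 'M[C]_(p, q)) (B : 'M[C]_(q, r)) :
  castmx (e1, e2) A *m castmx (e2, e3) B = castmx (e1, e3) (A *m B).
Proof. by case: p' / e1; case: q' / e2; case: r' / e3; rewrite !castmx_id. Qed.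

Lemma hadj_cast p q p' q' (e1 : p = p') (e2 : q = q') (A : 'M[C]_(p, q)) :
  adj (castmx (e1, e2) A) = castmx (e2, e1) (adj A).
Proof. by case: p' / e1; case: q' / e2; rewrite !castmx_id. Qed.

Lemma castmxZ p q p' q' (e1 : p = p') (e2 : q = q') a (A : 'M[C]_(p, q)) :
  castmx (e1, e2) (a *: A) = a *: castmx (e1, e2) A.
Proof. by case: p' / e1; case: q' / e2; rewrite !castmx_id. Qed.

Lemma castmxD p q p' q' (e1 : p = p') (e2 : q = q') (A B : 'M[C]_(p, q)) :
  castmx (e1, e2) (A + B) = castmx (e1, e2) A + castmx (e1, e2) B.
Proof. by case: p' / e1; case: q' / e2; rewrite !castmx_id. Qed.

Lemma castmx_sum p q p' q' (e1 : p = p') (e2 : q = q') I (s : seq I) (F : I -> 'M[C]_(p, q)) :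
  castmx (e1, e2) (\sum_(i <- s) F i) = \sum_(i <- s) castmx (e1, e2) (F i).
Proof. by case: p' / e1; case: q' / e2; rewrite castmx_id; apply: eq_bigr => i _; rewrite castmx_id. Qed.

Lemma castmx1 p p' (e : p = p') : castmx (e, e) (1%:M : 'M[C]_p) = 1%:M.
Proof. by case: p' / e; rewrite castmx_id. Qed.

Lemma hadjM m n p (A : 'M[C]_(m, n)) (B : 'M[C]_(n, p)) : adj (A *m B) = adj B *m adj A.
Proof. by rewrite /adj trmx_mul map_mxM. Qed.

Lemma hadjD m n (A B : 'M[C]_(m, n)) : adj (A + B) = adj A + adj B.
Proof. by rewrite /adj linearD map_mxD. Qed.

Lemma hadjN m n (A : 'M[C]_(m, n)) : adj (- A) = - adj A.
Proof. by rewrite /adj linearN map_mxN. Qed.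

Lemma hadjB m n (A B : 'M[C]_(m, n)) : adj (A - B) = adj A - adj B.
Proof. by rewrite hadjD hadjN. Qed.

Lemma hadjZ m n a (A : 'M[C]_(m, n)) : adj (a *: A) = a^*%C *: adj A.
Proof. by apply/matrixP=> i j; rewrite !mxE rmorphM. Qed.

Lemma hadj_sum m n I (s : seq I) (F : I -> 'M[C]_(m, n)) :
  adj (\sum_(i <- s) F i) = \sum_(i <- s) adj (F i).
Proof.
elim: s => [|x s IH]; first by rewrite !big_nil /adj linear0 map_mx0.
by rewrite !big_cons hadjD IH.
Qed.

Lemma hadjK m n (A : 'M[C]_(m, n)) : adj (adj A) = A.
Proof. by apply/matrixP=> i j; rewrite !mxE conjcK. Qed.

Lemma hadj1 m : adj (1%:M : 'M[C]_m) = 1%:M.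
Proof. by rewrite /adj trmx1 map_mx1. Qed.

Lemma hadjT m n p q (A : 'M[C]_(m, n)) (B : 'M[C]_(p, q)) : adj (A *t B) = adj A *t adj B.
Proof. by rewrite /adj trmx_tens map_mxT. Qed.

Lemma tensDl m n p q (A B : 'M[C]_(m, n)) (D : 'M[C]_(p, q)) : (A + B) *t D = A *t D + B *t D.
Proof. by apply/matrixP=> i j; rewrite !mxE mulrDl. Qed.

Lemma tensDr m n p q (A : 'M[C]_(m, n)) (B D : 'M[C]_(p, q)) : A *t (B + D) = A *t B + A *t D.
Proof. by apply/matrixP=> i j; rewrite !mxE mulrDr. Qed.

Lemma tensZl m n p q a (A : 'M[C]_(m, n)) (D : 'M[C]_(p, q)) : (a *: A) *t D = a *: (A *t D).
Proof. by apply/matrixP=> i j; rewrite !mxE mulrA. Qed.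

Lemma tensZr m n p q a (A : 'M[C]_(m, n)) (D : 'M[C]_(p, q)) : A *t (a *: D) = a *: (A *t D).
Proof. by apply/matrixP=> i j; rewrite !mxE mulrCA. Qed.

Lemma tensNr m n p q (A : 'M[C]_(m, n)) (D : 'M[C]_(p, q)) : A *t (- D) = - (A *t D).
Proof. by rewrite -scaleN1r tensZr scaleN1r. Qed.

Lemma tens_suml m n p q I (s : seq I) (F : I -> 'M[C]_(m, n)) (D : 'M[C]_(p, q)) :
  (\sum_(i <- s) F i) *t D = \sum_(i <- s) (F i *t D).
Proof.
elim: s => [|x s IH]; first by rewrite !big_nil tens0mx.
by rewrite !big_cons tensDl IH.
Qed.

Lemma tens_sumr m n p q I (s : seq I) (A : 'M[C]_(m, n)) (F : I -> 'M[C]_(p, q)) :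
  A *t (\sum_(i <- s) F i) = \sum_(i <- s) (A *t F i).
Proof.
elim: s => [|x s IH]; first by rewrite !big_nil tensmx0.
by rewrite !big_cons tensDr IH.
Qed.

Lemma tens11 m n : (1%:M : 'M[C]_m) *t (1%:M : 'M[C]_n) = 1%:M.
Proof.
apply/matrixP=> i j.
case: (mxtens_indexP i)=> i0 i1; case: (mxtens_indexP j)=> j0 j1.
rewrite tensmxE !mxE -natrM (inj_eq (can_inj (@mxtens_indexK _ _))).
by rewrite xpair_eqE mulnb.
Qed.

Lemma tens_scal11 (a b : C) :
  castmx (muln1 1, muln1 1) ((a%:M : 'M[C]_1) *t (b%:M : 'M[C]_1)) = (a * b)%:M.
Proof.
apply/matrixP=> i j; rewrite !ord1 castmxE /= !mxE /=.
by rewrite !mulr1n.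
Qed.

Lemma mul_tens m n p q r s (A : 'M[C]_(m, n)) (B : 'M[C]_(p, q)) (D : 'M[C]_(n, r)) (E : 'M[C]_(q, s)) :
  (A *t B) *m (D *t E) = (A *m D) *t (B *m E).
Proof. exact: tensmx_mul. Qed.

End L1.

Section L2.
Variable R : realType.
Local Notation C := R[i].

Lemma tprodS m (f : nat -> 'M[C]_2) : tprod m.+1 f =
  castmx (esym (expnS 2 m), esym (expnS 2 m)) (f 0%N *t tprod m (fun i => f i.+1)).
Proof. by []. Qed.

Lemma tketS m (b : nat -> bool) : tket R m.+1 b =
  castmx (esym (expnS 2 m), muln1 1) (ket1q R (b 0%N) *t tket R m (fun i => b i.+1)).
Proof. by []. Qed.

Lemma tprod_mul m (f g : nat -> 'M[C]_2) :
  tprod m f *m tprod m g = tprod m (fun i => f i *m g i).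
Proof.
elim: m f g => [|m IH] f g; first by rewrite /= mul1mx.
by rewrite !tprodS castmxM mul_tens IH.
Qed.

Lemma tprod1 m (f : nat -> 'M[C]_2) : (forall i, f i = 1%:M) -> tprod m f = 1%:M.
Proof.
elim: m f => [|m IH] f Hf; first by [].
by rewrite tprodS Hf IH // tens11 castmx1.
Qed.

Lemma hadj_tprod m (f : nat -> 'M[C]_2) : adj (tprod m f) = tprod m (fun i => adj (f i)).
Proof.
elim: m f => [|m IH] f; first by rewrite /= hadj1.
by rewrite !tprodS hadj_cast hadjT IH.
Qed.

Lemma eq_tket m (c d : nat -> bool) : (forall i, (i < m)%N -> c i = d i) ->
  tket R m c = tket R m d.
Proof.
elim: m c d => [|m IH] c d H; first by [].
rewrite !tketS H // (IH _ (fun i => d i.+1)) // => i Hi; exact: H.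
Qed.

Lemma tprod_tket m (f : nat -> 'M[C]_2) (c d : nat -> bool) (a : nat -> C) :
  (forall i, (i < m)%N -> f i *m ket1q R (c i) = a i *: ket1q R (d i)) ->
  tprod m f *m tket R m c = (\prod_(i < m) a i) *: tket R m d.
Proof.
elim: m f c d a => [|m IH] f c d a H; first by rewrite big_ord0 scale1r mul1mx.
rewrite tprodS !tketS castmxM mul_tens H // (IH _ _ (fun i => d i.+1) (fun i => a i.+1)).
  by rewrite tensZl tensZr scalerA castmxZ big_ord_recl.
by move=> i Hi; apply: H.
Qed.

Lemma ket_inner (b b' : bool) :
  adj (ket1q R b) *m ket1q R b' = ((b == b')%:R : C)%:M.
Proof.
apply/matrixP=> i j; rewrite !ord1 !mxE big_ord_recl big_ord1 !mxE /=.
case: b; case: b'; by rewrite /bump /=; simpc.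
Qed.

Lemma tket_inner m (c d : nat -> bool) :
  adj (tket R m c) *m tket R m d = (\prod_(i < m) ((c i == d i)%:R : C))%:M.
Proof.
elim: m c d => [|m IH] c d; first by rewrite big_ord0 hadj1 mul1mx.
rewrite !tketS hadj_cast hadjT castmxM mul_tens ket_inner IH tens_scal11.
by rewrite big_ord_recl.
Qed.

End L2.

Section L3.
Variable R : realType.
Local Notation C := R[i].

Lemma binS m s : bin R m.+1 s =
  castmx (esym (expnS 2 m), muln1 1) (ket1q R (odd s) *t bin R m s./2).
Proof.
rewrite /bin tketS expn0 divn1; congr (castmx _ (_ *t _)).
by apply: eq_tket => i _; rewrite expnS divnMA divn2.
Qed.

Lemma bin0 s : bin R 0 s = 1%:M.
Proof. by []. Qed.

Lemma bin_inner m z y : (z < 2 ^ m)%N -> (y < 2 ^ m)%N ->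
  adj (bin R m z) *m bin R m y = (((z == y) : nat)%:R : C)%:M.
Proof.
elim: m z y => [|m IH] z y Hz Hy.
  by move: Hz Hy; rewrite !ltnS !leqn0 => /eqP -> /eqP ->; rewrite !bin0 hadj1 mul1mx.
rewrite !binS hadj_cast hadjT castmxM mul_tens ket_inner IH; last 2 first.
- by rewrite -ltn_double -!muln2 -expnSr; apply: leq_ltn_trans Hz; rewrite muln2 -[X in (_ <= X)%N]odd_double_half leq_addl.
- by rewrite -ltn_double -!muln2 -expnSr; apply: leq_ltn_trans Hy; rewrite muln2 -[X in (_ <= X)%N]odd_double_half leq_addl.
rewrite tens_scal11 -natrM; congr ((_ %:R)%:M).
rewrite mulnb; congr nat_of_bool; apply/idP/idP.
- by move=> /andP [/eqP H1 /eqP H2]; rewrite -[z]odd_double_half -[y]odd_double_half H1 H2.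
- by move=> /eqP ->; rewrite !eqxx.
Qed.

Lemma sum_double (V : nmodType) j (F : nat -> V) :
  \sum_(0 <= y < j.*2) F y = \sum_(0 <= y < j) (F y.*2 + F y.*2.+1).
Proof.
elim: j => [|j IH]; first by rewrite !big_geq.
by rewrite doubleS !big_nat_recr //= IH addrA.
Qed.

Lemma sum_pow2S (V : nmodType) m (F : nat -> V) :
  \sum_(y < 2 ^ m.+1) F y = \sum_(y < 2 ^ m) (F y.*2 + F y.*2.+1).
Proof.
rewrite -(big_mkord (fun _ => true) F) -(big_mkord (fun _ => true) (fun y => F y.*2 + F y.*2.+1)).
by rewrite expnS mul2n sum_double.
Qed.

Lemma bin_even m y : bin R m.+1 y.*2 =
  castmx (esym (expnS 2 m), muln1 1) (ket1q R false *t bin R m y).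
Proof. by rewrite binS odd_double doubleK. Qed.

Lemma bin_odd m y : bin R m.+1 y.*2.+1 =
  castmx (esym (expnS 2 m), muln1 1) (ket1q R true *t bin R m y).
Proof. by rewrite binS /= odd_double /= uphalf_double. Qed.

End L3.

Section L4.
Local Open Scope complex_scope.
Variable R : realType.
Local Notation C := R[i].

Definition isq (N : nat) : C := ((Num.sqrt (N%:R : R))^-1)%:C.

Lemma had_ket0 : hadamard R *m ket1q R false = isq 2 *: (ket1q R false + ket1q R true).
Proof.
apply/matrixP=> i j; rewrite !ord1 !mxE big_ord_recl big_ord1 !mxE /bump /=.
case: i => [[|[|i]] Hi] //=; rewrite /isq; simpc.
all: by [].
Qed.

Lemma sqrt2_inv2 : (Num.sqrt (2:R))^-1 * (Num.sqrt (2:R))^-1 = 2^-1.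
Proof. by rewrite -invfM -expr2 sqr_sqrtr // ler0n. Qed.

Lemma hadH : hadamard R *m hadamard R = 1%:M.
Proof.
apply/matrixP=> i j; rewrite !mxE big_ord_recl big_ord1 !mxE /bump /=.
case: i => [[|[|i]] Hi] //=; case: j => [[|[|j]] Hj] //=; simpc.
all: try by [].
all: rewrite sqrt2_inv2; apply/eqP; rewrite eq_complex /= eqxx andbT; apply/eqP; field.
all: by [].
Qed.

Lemma hadA : adj (hadamard R) = hadamard R.
Proof.
apply/matrixP=> i j; rewrite !mxE.
case: i => [[|[|i]] Hi] //=; case: j => [[|[|j]] Hj] //=; simpc; by [].
Qed.

Lemma isqM a b : isq (a * b) = isq a * isq b.
Proof. by rewrite /isq natrM sqrtrM ?ler0n // invfM rmorphM. Qed.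

Lemma tprodH_vac m : tprod m (fun _ => hadamard R) *m vac R m =
  isq (2 ^ m) *: \sum_(y < 2 ^ m) bin R m y.
Proof.
elim: m => [|m IH].
  by rewrite big_ord_recl big_ord0 addr0 /isq /= sqrtr1 invr1 scale1r mul1mx.
rewrite tprodS /vac tketS castmxM mul_tens had_ket0 IH sum_pow2S.
rewrite tensZl tensZr scalerA tensDl !tens_sumr -big_split castmxZ castmx_sum.
have -> : isq (2 ^ m.+1) = isq 2 * isq (2 ^ m) by rewrite expnS isqM.
congr (_ *: _); apply: eq_bigr => y _.
by rewrite castmxD bin_even bin_odd.
Qed.

End L4.

Section L5.
Local Open Scope complex_scope.
Variable R : realType.
Local Notation C := R[i].

Lemma expiD (a b : R) : expi a * expi b = expi (a + b).
Proof.
rewrite /expi cosD sinD; simpc; congr (_ +i* _); ring.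
Qed.

Lemma expi0 : expi (0 : R) = 1.
Proof. by rewrite /expi cos0 sin0. Qed.

Lemma expiJ (a : R) : (expi a)^* = expi (- a).
Proof. by rewrite /expi cosN sinN; simpc. Qed.

Lemma expiX (a : R) n : expi a ^+ n = expi (a *+ n).
Proof.
elim: n => [|n IH]; first by rewrite expr0 mulr0n expi0.
by rewrite exprS IH expiD mulrS.
Qed.

Lemma expiNK (a : R) : expi a * expi (- a) = 1.
Proof. by rewrite expiD subrr expi0. Qed.

Lemma expi2pi (t : nat) : expi (2 * pi * t%:R) = 1 :> C.
Proof.
have -> : 2 * pi * t%:R = 0 + (pi *+ 2) *+ t :> R.
  by rewrite add0r -mulr_natr; ring.
have hc : cos (0 + (pi *+ 2) *+ t) = cos (0 : R) := periodicn (@cosD2pi R) t 0.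
have hs : sin (0 + (pi *+ 2) *+ t) = sin (0 : R) := periodicn (@sinD2pi R) t 0.
by rewrite /expi hc hs cos0 sin0.
Qed.

Lemma expi_neq1 (th : R) : 0 < th < pi *+ 2 -> expi th != 1.
Proof.
move=> /andP [h0 h1]; apply/negP => /eqP; rewrite /expi.
move=> /eqP; rewrite eq_complex /= => /andP [/eqP hc _].
have hs : 0 < sin (th / 2).
  apply: sin_gt0_pi; apply/andP; split; first by lra.
  by move: h1; rewrite mulr2n; lra.
have : cos ((th / 2) *+ 2) = 1 by rewrite mulr2n -splitr.
rewrite cos_mulr2n cos2sin2 => h.
nra.
Qed.

End L5.

Section L5b.
Local Open Scope complex_scope.
Variable R : realType.
Local Notation C := R[i].

Lemma aux_ineq2 (p x y : R) : 0 < p -> 0 <= y -> y < x -> x < 1 ->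
  (0 < 2 * (p * x) - 2 * (p * y)) && (2 * (p * x) - 2 * (p * y) < p *+ 2).
Proof.
move=> hp hy hxy hx.
have h1 : 0 < p * (x - y) by apply: mulr_gt0; lra.
have h2 : p * (x - y) < p by rewrite -[X in _ < X]mulr1 ltr_pM2l //; lra.
rewrite mulrBr in h1 h2; rewrite mulr2n; apply/andP; split; lra.
Qed.

Lemma geom_sum (N t z : nat) : (0 < N)%N -> (t < N)%N -> (z < N)%N ->
  \sum_(y < N) (expi (2 * pi * (t * y)%:R / N%:R) * expi (- (2 * pi * (y * z)%:R / N%:R)))
  = ((t == z)%:R * N%:R : C).
Proof.
move=> N0 tN zN.
have N0' : (N%:R : R) != 0 by rewrite pnatr_eq0 -lt0n.
pose a : R := 2 * pi * t%:R / N%:R.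
pose b : R := 2 * pi * z%:R / N%:R.
pose w := expi a * expi (- b).
have hterm : forall y : nat, expi (2 * pi * (t * y)%:R / N%:R) * expi (- (2 * pi * (y * z)%:R / N%:R)) = w ^+ y.
  move=> y; rewrite exprMn !expiX; congr (expi _ * expi _).
    by rewrite -[a *+ y]mulr_natr /a natrM !mulrA mulrAC.
  by rewrite -[(- b) *+ y]mulr_natr mulNr /b mulnC natrM !mulrA mulrAC.
under eq_bigr do rewrite hterm.
have [tz|tz] := eqVneq t z.
  have -> : w = 1 by rewrite /w /a /b tz expiNK.
  rewrite (eq_bigr (fun _ => (1 : C))); last by move=> i _; exact: expr1n.
  by rewrite sumr_const card_ord mul1r.
rewrite mul0r.

have wN : w ^+ N = 1.
  rewrite /w exprMn !expiX.
  have hm : forall c : R, (2 * pi * c / N%:R) *+ N = 2 * pi * c.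
    by move=> c; rewrite -mulr_natr divfK.
  by rewrite mulNrn /a /b !hm -expiJ !expi2pi conjc1 mulr1.
have w1 : w != 1.
  have hpi := pi_gt0 R.
  have ht : (t%:R / N%:R : R) < 1 by rewrite ltr_pdivrMr ?mul1r ?ltr_nat // ltr0n.
  have hz : (z%:R / N%:R : R) < 1 by rewrite ltr_pdivrMr ?mul1r ?ltr_nat // ltr0n.
  have ht0 : 0 <= (t%:R / N%:R : R) by rewrite divr_ge0 // ler0n.
  have hz0 : 0 <= (z%:R / N%:R : R) by rewrite divr_ge0 // ler0n.
  have [zt|zt] := ltnP z t.
    have hzt : (z%:R / N%:R : R) < t%:R / N%:R by rewrite ltr_pM2r ?invr_gt0 ?ltr0n ?ltr_nat.
    rewrite /w expiD; apply: expi_neq1; rewrite /a /b mulr2n.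
    rewrite -!mulrA; exact: aux_ineq2.
  have hzt : (t%:R / N%:R : R) < z%:R / N%:R.
    by rewrite ltr_pM2r ?invr_gt0 ?ltr0n ?ltr_nat // ltn_neqAle tz zt.
  rewrite /w expiD; apply/negP => /eqP h1.
  have : expi (b - a) != 1.
    apply: expi_neq1; rewrite /a /b mulr2n.
    rewrite -!mulrA; exact: aux_ineq2.
  by rewrite -opprB -expiJ h1 conjc1 eqxx.
have := subrX1 w N; rewrite wN subrr => /esym /eqP; rewrite mulf_eq0 subr_eq0 (negbTE w1) /=.
by move/eqP.
Qed.

End L5b.

Section L6.
Local Open Scope complex_scope.
Variable R : realType.
Local Notation C := R[i].

Definition tk n (b : n.-tuple bool) : 'cV[C]_(2 ^ n) := tket R n (nth false b).

Lemma sum_tupleS (V : nmodType) n (F : n.+1.-tuple bool -> V) :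
  \sum_(b : n.+1.-tuple bool) F b = \sum_(x : bool) \sum_(b : n.-tuple bool) F (cons_tuple x b).
Proof.
rewrite pair_big /=.
rewrite (reindex (fun p : bool * n.-tuple bool => cons_tuple p.1 p.2)) //=.
exists (fun b : n.+1.-tuple bool => (thead b, behead_tuple b)).
  by move=> [x b] _ /=; rewrite theadE; congr pair; apply: val_inj.
by move=> b _ /=; rewrite [in RHS](tuple_eta b); apply: val_inj.
Qed.

Lemma tk_cons n x (b : n.-tuple bool) :
  tk (cons_tuple x b) = castmx (esym (expnS 2 n), muln1 1) (ket1q R x *t tk b).
Proof. by rewrite /tk tketS. Qed.

Lemma ket_complete : \sum_(x : bool) ket1q R x *m adj (ket1q R x) = 1%:M.
Proof.
rewrite big_bool.
apply/matrixP=> i j; rewrite !mxE !big_ord1 !mxE.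
case: i => [[|[|i]] Hi] //=; case: j => [[|[|j]] Hj] //=; simpc; by [].
Qed.

Lemma tk_complete n : \sum_(b : n.-tuple bool) tk b *m adj (tk b) = 1%:M.
Proof.
elim: n => [|n IH].
  rewrite (big_pred1 [tuple]) /=; last by move=> b; apply/esym/eqP/val_inj; rewrite /= (tuple0 b).
  by rewrite /tk /= hadj1 mul1mx.
rewrite sum_tupleS.
under eq_bigr => x _ do under eq_bigr => b _ do
  rewrite tk_cons hadj_cast hadjT castmxM mul_tens.
under eq_bigr => x _ do rewrite -castmx_sum -tens_sumr IH.
by rewrite -castmx_sum -tens_suml ket_complete tens11 castmx1.
Qed.

Lemma tk_inner n (b b' : n.-tuple bool) :
  adj (tk b') *m tk b = (((b' == b) : nat)%:R : C)%:M.
Proof.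
rewrite /tk tket_inner; congr (_%:M).
have [->|neq] := eqVneq b' b.
  by rewrite big1 // => i _; rewrite eqxx.
have [i Hi] : exists i : 'I_n, nth false b' i != nth false b i.
  apply/existsP; apply: contraR neq => /existsPn H.
  apply/eqP/val_inj/(@eq_from_nth _ false); first by rewrite !size_tuple.
  move=> i; rewrite size_tuple => Hi; have := H (Ordinal Hi); by move/negPn/eqP.
by rewrite (bigD1 i) //= (negbTE Hi) mul0r.
Qed.

Lemma Pw_tk n t (b : n.-tuple bool) :
  Pw R n t *m tk b = (((count id b == t) : nat)%:R : C) *: tk b.
Proof.
rewrite /Pw mulmx_suml.
under eq_bigr => b' _ do rewrite -mulmxA -/(tk b') tk_inner mul_mx_scalar.
rewrite big_mkcond (bigD1 b) //= big1; first by rewrite eqxx addr0; case: (count id b == t); rewrite ?scale1r ?scale0r.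
by move=> b' /negbTE ->; case: ifP => _; rewrite ?scale0r.
Qed.

Lemma hadj_sumP m n I (s : seq I) (P : pred I) (F : I -> 'M[C]_(m, n)) :
  adj (\sum_(i <- s | P i) F i) = \sum_(i <- s | P i) adj (F i).
Proof. by rewrite big_mkcond hadj_sum [RHS]big_mkcond; apply: eq_bigr => i _; case: (P i); rewrite ?linear0 ?hadjN // /adj trmx0 map_mx0. Qed.

Lemma adj_Pw n t : adj (Pw R n t) = Pw R n t.
Proof.
by rewrite /Pw hadj_sumP; apply: eq_bigr => b _; rewrite hadjM hadjK.
Qed.

End L6.

Section L7.
Local Open Scope complex_scope.
Variable R : realType.
Local Notation C := R[i].

Definition ph n (b : n.-tuple bool) (s : nat) : C :=
  expi (2 * pi * (count id b * s)%:R / (n.+1)%:R).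

Lemma count_lt n (b : n.-tuple bool) : (count id b < n.+1)%N.
Proof. by rewrite ltnS -[X in (_ <= X)%N](size_tuple b) count_size. Qed.

Lemma sumPw_tk n (a : 'I_n.+1 -> C) (b : n.-tuple bool) :
  (\sum_(t < n.+1) a t *: Pw R n t) *m tk R b = a (Ordinal (count_lt b)) *: tk R b.
Proof.
rewrite mulmx_suml.
under eq_bigr => t _ do rewrite -scalemxAl Pw_tk scalerA.
rewrite -scaler_suml (bigD1 (Ordinal (count_lt b))) //= eqxx mulr1 big1 ?addr0 //.
move=> t Ht.
have -> : (count id b == t) = false.
  by apply/negbTE; apply: contra Ht => /eqP H; apply/eqP/val_inj.
by rewrite mulr0.
Qed.

Lemma Us_tk n s (b : n.-tuple bool) : Us R n s *m tk R b = ph b s *: tk R b.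
Proof. by rewrite /Us sumPw_tk. Qed.

Lemma adjUs_tk n s (b : n.-tuple bool) : adj (Us R n s) *m tk R b = (ph b s)^* *: tk R b.
Proof.
rewrite /Us hadj_sum.
under eq_bigr => t _ do rewrite hadjZ adj_Pw.
by rewrite sumPw_tk.
Qed.

Lemma eq_tprod m (f g : nat -> 'M[C]_2) : (forall i, f i = g i) -> tprod m f = tprod m g.
Proof.
elim: m f g => [|m IH] f g H; first by [].
by rewrite !tprodS H (IH _ (fun i => g i.+1)).
Qed.

Lemma ctrlproj_bin k m bb y : (m < k)%N ->
  ctrlproj R k m bb *m bin R k y = (((odd (y %/ 2 ^ m) == bb) : nat)%:R : C) *: bin R k y.
Proof.
move=> Hm; rewrite /ctrlproj /bin.
rewrite (@tprod_tket R k _ _ (fun l => odd (y %/ 2 ^ l))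
  (fun i => if i == m then (((odd (y %/ 2 ^ i) == bb) : nat)%:R : C) else 1)).
  rewrite (bigD1 (Ordinal Hm)) //= eqxx big1 ?mulr1 // => i Hi.
  have -> : (nat_of_ord i == m) = false by apply/negbTE; apply: contra Hi => /eqP H; apply/eqP/val_inj.
  by [].
move=> i Hi; case: eqP => [->|_]; last by rewrite /qI mul1mx scale1r.
rewrite -mulmxA ket_inner mul_mx_scalar.
rewrite eq_sym; case: eqP => [->|_] //; by rewrite !scale0r.
Qed.

Lemma adj_ctrlproj k m bb : adj (ctrlproj R k m bb) = ctrlproj R k m bb.
Proof.
rewrite /ctrlproj hadj_tprod; apply: eq_tprod => i.
by case: (i == m); rewrite ?hadjM ?hadjK // /qI hadj1.
Qed.

End L7.

Section L8.
Local Open Scope complex_scope.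
Variable R : realType.
Local Notation C := R[i].

Lemma CU_bin k n m y (b : n.-tuple bool) : (m < k)%N ->
  CU R k n m *m (bin R k y *t tk R b) =
  (if odd (y %/ 2 ^ m) then ph R b (2 ^ m) else 1) *: (bin R k y *t tk R b).
Proof.
move=> Hm; rewrite /CU mulmxDl !mul_tens !ctrlproj_bin // /idm mul1mx Us_tk.
rewrite tensZl tensZr tensZl scalerA.
by case: (odd _); rewrite /=; [rewrite scale0r add0r mulr1 | rewrite mulr0 scale0r addr0].
Qed.

Lemma adjCU_bin k n m y (b : n.-tuple bool) : (m < k)%N ->
  adj (CU R k n m) *m (bin R k y *t tk R b) =
  (if odd (y %/ 2 ^ m) then (ph R b (2 ^ m))^* else 1) *: (bin R k y *t tk R b).
Proof.
move=> Hm; rewrite /CU hadjD !hadjT !adj_ctrlproj mulmxDl !mul_tens !ctrlproj_bin // /idm hadj1 mul1mx adjUs_tk.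
rewrite tensZl tensZr tensZl scalerA.
by case: (odd _); rewrite /=; [rewrite scale0r add0r mulr1 | rewrite mulr0 scale0r addr0].
Qed.

Lemma bigmul_eig N I (s : seq I) (I0 : 'M[C]_N) (F : I -> 'M[C]_N) (c : I -> C) (v : 'cV[C]_N) :
  I0 *m v = v -> (forall i, F i *m v = c i *: v) ->
  (\big[@mulmx C N N N / I0]_(i <- s) F i) *m v = (\prod_(i <- s) c i) *: v.
Proof.
move=> H0 H; elim: s => [|x s IH]; first by rewrite !big_nil scale1r.
by rewrite !big_cons -mulmxA IH -scalemxAr H scalerA mulrC.
Qed.

Lemma adj_bigmul_eig N I (s : seq I) (I0 : 'M[C]_N) (F : I -> 'M[C]_N) (c : I -> C) (v : 'cV[C]_N) :
  adj I0 *m v = v -> (forall i, adj (F i) *m v = c i *: v) ->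
  adj (\big[@mulmx C N N N / I0]_(i <- s) F i) *m v = (\prod_(i <- s) c i) *: v.
Proof.
move=> H0 H; elim: s => [|x s IH]; first by rewrite !big_nil scale1r.
by rewrite !big_cons hadjM -mulmxA H -scalemxAr IH scalerA.
Qed.

Lemma bin_expand k y : (y < 2 ^ k)%N -> y = (\sum_(m < k) odd (y %/ 2 ^ m) * 2 ^ m)%N.
Proof.
elim: k y => [|k IH] y Hy.
  by move: Hy; rewrite expn0 ltnS leqn0 big_ord0 => /eqP.
rewrite big_ord_recl /= expn0 divn1 muln1.
under eq_bigr => i _ do rewrite /bump /= add1n expnS divnMA divn2 mulnCA.
rewrite -big_distrr /= -IH.
  by rewrite -[y in LHS]odd_double_half -muln2 mulnC.
rewrite -ltn_double -!muln2 -expnSr; apply: leq_ltn_trans Hy.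
by rewrite muln2 -[X in (_ <= X)%N]odd_double_half leq_addl.
Qed.

Lemma prod_expi I (s : seq I) (g : I -> R) :
  \prod_(i <- s) expi (g i) = expi (\sum_(i <- s) g i).
Proof.
elim: s => [|x s IH]; first by rewrite !big_nil expi0.
by rewrite !big_cons IH expiD.
Qed.

Lemma phase_prod k n (b : n.-tuple bool) y : (y < 2 ^ k)%N ->
  \prod_(m < k) (if odd (y %/ 2 ^ m) then ph R b (2 ^ m) else 1) = ph R b y.
Proof.
move=> Hy.
have E : forall m : 'I_k, (if odd (y %/ 2 ^ m) then ph R b (2 ^ m) else 1) =
   expi (2 * pi * (count id b * (odd (y %/ 2 ^ m) * 2 ^ m))%:R / (n.+1)%:R).
  by move=> m; case: (odd _); rewrite /ph ?mul1n // mul0n muln0 mulr0 mul0r expi0.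
under eq_bigr => m _ do rewrite E.
rewrite prod_expi /ph -mulr_suml -mulr_sumr -natr_sum -big_distrr /=.
by rewrite -bin_expand.
Qed.

End L8.

Section L9.
Local Open Scope complex_scope.
Variable R : realType.
Local Notation C := R[i].

Lemma sigx_ket x : sigx R *m ket1q R x = ket1q R (~~ x).
Proof.
apply/matrixP=> i j; rewrite !ord1 !mxE big_ord_recl big_ord1 !mxE /bump /=.
by case: x; case: i => [[|[|i]] Hi] //=; simpc.
Qed.

Lemma Xflip_tket k r (c : nat -> bool) :
  Xflip R k r *m tket R k c = tket R k (fun l => c l == odd (r %/ 2 ^ l)).
Proof.
rewrite /Xflip (@tprod_tket R k _ _ (fun l => c l == odd (r %/ 2 ^ l)) (fun _ => 1)).
  by rewrite big1 ?scale1r.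
move=> i _; case: (odd _); first by rewrite eqb_id /qI mul1mx scale1r.
by rewrite sigx_ket eqbF_neg scale1r.
Qed.

Lemma CZ_tket k (d : nat -> bool) :
  CZ R k *m tket R k d = tket R k d -
    (2 * \prod_(l < k) (((true == d l) : nat)%:R : C)) *: tket R k (fun _ => true).
Proof.
by rewrite /CZ /idm mulmxBl mul1mx -scalemxAl -mulmxA tket_inner mul_mx_scalar scalerA.
Qed.

Lemma Oop_bin k r t : (t < 2 ^ k)%N -> (r < 2 ^ k)%N ->
  Oop R k r *m bin R k t = (if t == r then -1 else 1) *: bin R k t.
Proof.
move=> Ht Hr.
have hp : \prod_(l < k) (((odd (r %/ 2 ^ l) == odd (t %/ 2 ^ l)) : nat)%:R : C) = ((r == t) : nat)%:R.
  have := bin_inner R Hr Ht; rewrite /bin tket_inner => /matrixP /(_ 0 0); rewrite !mxE /=.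
  by rewrite !mulr1n.
rewrite /Oop -!mulmxA /bin Xflip_tket CZ_tket mulmxBr -scalemxAr !Xflip_tket.
rewrite (@eq_tket R k (fun l => (odd (t %/ 2 ^ l) == odd (r %/ 2 ^ l)) == odd (r %/ 2 ^ l)) (fun l => odd (t %/ 2 ^ l))); last by move=> i _; case: (odd (t %/ 2 ^ i)); case: (odd (r %/ 2 ^ i)).
rewrite (@eq_tket R k (fun l => true == odd (r %/ 2 ^ l)) (fun l => odd (r %/ 2 ^ l))); last by move=> i _; case: (odd (r %/ 2 ^ i)).
rewrite (eq_bigr (fun l : 'I_k => (((odd (r %/ 2 ^ l) == odd (t %/ 2 ^ l)) : nat)%:R : C))); last first.
  by move=> i _; case: odd; case: odd.
rewrite hp eq_sym; case: eqP => [->|_]; last by rewrite mulr0 scale0r subr0 scale1r.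
rewrite mulr1 -/(bin R k r) -[X in X - _]scale1r -scalerBl.
by congr (_ *: _); rewrite mulr2n opprD addrA subrr add0r.
Qed.

End L9.

Section L10.
Local Open Scope complex_scope.
Variable R : realType.
Local Notation C := R[i].

Definition qcoef (N y z : nat) : C := isq R N * expi (- (2 * pi * (y * z)%:R / N%:R)).

Lemma IQFT_bin k n y : n.+1 = (2 ^ k)%N -> (y < n.+1)%N ->
  IQFT R k n *m bin R k y = \sum_(z < n.+1) qcoef n.+1 y z *: bin R k z.
Proof.
move=> Hn Hy; rewrite /IQFT mulmx_suml.
under eq_bigr => y' _ do (rewrite mulmx_suml; under eq_bigr => z _ do
  rewrite -scalemxAl -mulmxA bin_inner -?Hn // mul_mx_scalar scalerA).
rewrite (bigD1 (Ordinal Hy)) //= [X in _ + X = _]big1 ?addr0.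
  by apply: eq_bigr => z _; rewrite eqxx mulr1.
move=> y' Hy'; apply: big1 => z _.
have -> : (nat_of_ord y' == y) = false by apply/negbTE; apply: contra Hy' => /eqP H; apply/eqP/val_inj.
by rewrite mulr0 scale0r.
Qed.

Lemma adjIQFT_bin k n t : n.+1 = (2 ^ k)%N -> (t < n.+1)%N ->
  adj (IQFT R k n) *m bin R k t = \sum_(y < n.+1) (qcoef n.+1 y t)^* *: bin R k y.
Proof.
move=> Hn Ht; rewrite /IQFT hadj_sum mulmx_suml.
apply: eq_bigr => y _.
rewrite hadj_sum mulmx_suml.
under eq_bigr => z _ do
  rewrite hadjZ hadjM hadjK -scalemxAl -mulmxA bin_inner -?Hn // mul_mx_scalar scalerA.
rewrite (bigD1 (Ordinal Ht)) //= [X in _ + X = _]big1 ?addr0.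
  by rewrite eqxx mulr1.
move=> z Hz.
have -> : (nat_of_ord z == t) = false by apply/negbTE; apply: contra Hz => /eqP H; apply/eqP/val_inj.
by rewrite mulr0 scale0r.
Qed.

Lemma qcoefJ N y t : conjc (qcoef N y t) = isq R N * expi (2 * pi * (y * t)%:R / N%:R).
Proof.
have hI : conjc (isq R N) = isq R N by rewrite /isq; simpc.
rewrite /qcoef rmorphM.
change (conjc (isq R N) * conjc (expi (- (2 * pi * (y * t)%:R / N%:R))) = isq R N * expi (2 * pi * (y * t)%:R / N%:R)).
by rewrite hI expiJ opprK.
Qed.

End L10.

Section L11.
Local Open Scope complex_scope.
Variable R : realType.
Local Notation C := R[i].

Lemma sum_ord_eq (V : nmodType) N M (F : nat -> V) : N = M ->
  \sum_(y < N) F y = \sum_(y < M) F y.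
Proof. by move->. Qed.

Lemma Hvac k n : n.+1 = (2 ^ k)%N ->
  tprod k (fun _ => hadamard R) *m vac R k = isq R n.+1 *: \sum_(y < n.+1) bin R k y.
Proof.
by move=> Hn; rewrite tprodH_vac Hn.
Qed.

Lemma isq2N N : (0 < N)%N -> isq R N * isq R N * N%:R = 1.
Proof.
move=> N0; rewrite /isq -rmorphM -invfM -expr2 sqr_sqrtr ?ler0n //.
rewrite -(rmorph_nat (real_complex R)) -rmorphM mulVf ?rmorph1 //.
by rewrite pnatr_eq0 -lt0n.
Qed.

Lemma coefsum n (b : n.-tuple bool) (z : nat) : (z < n.+1)%N ->
  \sum_(y < n.+1) (isq R n.+1 * ph R b y * qcoef R n.+1 y z) = ((count id b == z) : nat)%:R.
Proof.
move=> Hz.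
have E : forall y : 'I_n.+1, isq R n.+1 * ph R b y * qcoef R n.+1 y z =
  isq R n.+1 * isq R n.+1 * (expi (2 * pi * (count id b * y)%:R / n.+1%:R) * expi (- (2 * pi * (y * z)%:R / n.+1%:R))).
  move=> y; rewrite /ph /qcoef.
  set i := isq R n.+1; set e1 := expi _; set e2 := expi _.
  by rewrite -(mulrA i e1) (mulrCA e1 i e2) (mulrA i i).
under eq_bigr => y _ do rewrite E.
rewrite -mulr_sumr (@geom_sum R n.+1 (count id b) z) //; last exact: count_lt.
by rewrite mulrCA isq2N // mulr1.
Qed.

Lemma Vop_fwd k n (b : n.-tuple bool) : n.+1 = (2 ^ k)%N ->
  Vop R k n *m (vac R k *t tk R b) = bin R k (count id b) *t tk R b.
Proof.
move=> Hn; rewrite /Vop.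
set A := IQFT R k n *t idm R n.
set B := \big[_/_]_(m < k) _.
set Cm := tprod k _ *t idm R n.
rewrite -!mulmxA.
have hC : Cm *m (vac R k *t tk R b) = isq R n.+1 *: \sum_(y < n.+1) (bin R k y *t tk R b).
  by rewrite /Cm mul_tens (Hvac Hn) /idm mul1mx tensZl tens_suml.
have hB : forall y : 'I_n.+1, B *m (bin R k y *t tk R b) = ph R b y *: (bin R k y *t tk R b).
  move=> y; rewrite /B (@bigmul_eig R _ _ _ _ _ (fun m : 'I_k => if odd (y %/ 2 ^ m) then ph R b (2 ^ m) else 1)).
  - by rewrite phase_prod // -Hn.
  - by rewrite /idm tens11 mul1mx.
  - by move=> m; rewrite CU_bin.
have hA : forall y : 'I_n.+1, A *m (bin R k y *t tk R b) =
    \sum_(z < n.+1) qcoef R n.+1 y z *: (bin R k z *t tk R b).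
  move=> y; rewrite /A mul_tens IQFT_bin // /idm mul1mx tens_suml.
  by apply: eq_bigr => z _; rewrite tensZl.
rewrite hC -scalemxAr mulmx_sumr.
under eq_bigr => y _ do rewrite hB.
rewrite -scalemxAr mulmx_sumr.
under eq_bigr => y _ do rewrite -scalemxAr hA scaler_sumr.
rewrite scaler_sumr.
under eq_bigr => y _ do (rewrite scaler_sumr; under eq_bigr => z _ do rewrite !scalerA).
rewrite exchange_big /=.
under eq_bigr => z _ do rewrite -scaler_suml coefsum //.
rewrite (bigD1 (Ordinal (count_lt b))) //= eqxx scale1r [X in _ + X]big1 ?addr0 //.
move=> z Hz; have -> : (count id b == z) = false.
  by apply/negbTE; apply: contra Hz => /eqP H; apply/eqP/val_inj.
by rewrite scale0r.
Qed.

Lemma phase_prodJ k n (b : n.-tuple bool) y : (y < 2 ^ k)%N ->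
  \prod_(m < k) (if odd (y %/ 2 ^ m) then conjc (ph R b (2 ^ m)) else 1) = conjc (ph R b y).
Proof.
move=> Hy; rewrite -(phase_prod R b Hy) rmorph_prod; apply: eq_bigr => m _.
by case: (odd _); rewrite ?rmorph1.
Qed.

Lemma Vop_adj k n (b : n.-tuple bool) : n.+1 = (2 ^ k)%N ->
  adj (Vop R k n) *m (bin R k (count id b) *t tk R b) = vac R k *t tk R b.
Proof.
move=> Hn; rewrite /Vop.
set A := IQFT R k n *t idm R n.
set B := \big[_/_]_(m < k) _.
set Cm := tprod k _ *t idm R n.
rewrite !hadjM -!mulmxA.
have hA : adj A *m (bin R k (count id b) *t tk R b) =
    \sum_(y < n.+1) conjc (qcoef R n.+1 y (count id b)) *: (bin R k y *t tk R b).
  rewrite /A hadjT /idm hadj1 mul_tens adjIQFT_bin //; last exact: count_lt.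
  rewrite mul1mx tens_suml; apply: eq_bigr => y _; by rewrite tensZl.
have hB : forall y : 'I_n.+1, adj B *m (bin R k y *t tk R b) = conjc (ph R b y) *: (bin R k y *t tk R b).
  move=> y; rewrite /B (@adj_bigmul_eig R _ _ _ _ _ (fun m : 'I_k => if odd (y %/ 2 ^ m) then conjc (ph R b (2 ^ m)) else 1)).
  - by rewrite phase_prodJ // -Hn.
  - by rewrite /idm hadjT !hadj1 tens11 mul1mx.
  - by move=> m; rewrite adjCU_bin.
rewrite hA mulmx_sumr.
under eq_bigr => y _ do rewrite -scalemxAr hB scalerA qcoefJ /ph expiJ (mulnC (count id b) y) -(mulrA (isq R n.+1)) expiNK mulr1.
rewrite -scaler_sumr -tens_suml -tensZl -(Hvac Hn).
rewrite /Cm hadjT hadj_tprod /idm hadj1 mul_tens mul1mx mulmxA tprod_mul.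
rewrite (@tprod1 R k); first by rewrite mul1mx.
by move=> i; rewrite hadA hadH.
Qed.

End L11.

Section L12.
Variable R : realType.
Local Open Scope complex_scope.
Local Notation C := R[i].

Lemma Sw_tk n r (b : n.-tuple bool) :
  Sw R n r *m tk R b = (if count id b == r then -1 else 1) *: tk R b.
Proof.
rewrite /Sw /idm mulmxBl mul1mx -scalemxAl Pw_tk scalerA.
case: eqP => _; last by rewrite mulr0 scale0r subr0 scale1r.
rewrite mulr1 -[X in X - _]scale1r -scalerBl.
by congr (_ *: _); rewrite mulr2n opprD addrA subrr add0r.
Qed.

Lemma Cop_tk k n r (X : 'M[R]_(n, r)) (b : n.-tuple bool) :
  n.+1 = (2 ^ k)%N -> (r < 2 ^ k)%N ->
  Cop k X *m (vac R k *t tk R b) = vac R k *t (Qop X *m tk R b).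
Proof.
move=> Hn Hr.
have Hc : (count id b < 2 ^ k)%N by rewrite -Hn count_lt.
rewrite /Cop /Qop mulNmx -mulmxA Vop_fwd // -mulmxA [(Oop _ _ _ *t _) *m _]mul_tens Oop_bin // /idm mul1mx tensZl.
rewrite -mulmxA -scalemxAr Vop_adj //.
rewrite -!mulmxA -!scalemxAr !mul_tens !mul1mx.
by rewrite mulNmx -!mulmxA Sw_tk -!scalemxAr tensNr tensZr.
Qed.

End L12.

Unset Implicit Arguments.

Theorem mainTheorem4 (R : realType) (k n r : nat) (X : 'M[R]_(n, r)) :
  (1 <= k)%N -> n = (2 ^ k - 1)%N -> (1 <= r)%N -> (r < n)%N ->
  (forall j : 'I_r, \sum_(i < n) X i j ^+ 2 = 1) ->
  \rank X = r ->
  Cop k X *m (vac R k *t columns X) = vac R k *t (Qop X *m columns X).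
Proof.
move=> Hk Hn Hr1 Hrn _ _.
have Hn1 : n.+1 = (2 ^ k)%N by rewrite Hn subn1 prednK // expn_gt0.
have Hr : (r < 2 ^ k)%N by rewrite -Hn1 ltnS ltnW.
have decomp : columns X = \sum_(b : n.-tuple bool) (adj (tk R b) *m columns X) 0 0 *: tk R b.
  rewrite -{1}[columns X]mul1mx -(tk_complete R n) mulmx_suml; apply: eq_bigr => b _.
  by rewrite -mulmxA {1}(mx11_scalar (adj (tk R b) *m columns X)) mul_mx_scalar.
rewrite decomp tens_sumr !mulmx_sumr tens_sumr; apply: eq_bigr => b _.
by rewrite tensZr -scalemxAr (Cop_tk _ _ Hn1 Hr) -scalemxAr tensZr.
Qed.
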